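(* Let $S$ be a multiplicatively closed subset of an $r$-lattice $L$ (with $1\in S$, $0\notin S$). Then $L$ is an $S$-Noetherian lattice if and only if every $S$-prime element of $L$ is $S$-compact.
   Context: A multiplicative lattice is a complete lattice $L$ with a commutative, associative multiplication $\cdot$ distributing over arbitrary joins, with $1$ as identity. Compact elements are defined as usual ($c\le\bigvee a_\alpha$ implies $c$ below a finite subjoin); $L_*$ denotes the set of compact elements. $(a:b)=\bigvee\{x\mid xb\le a\}$. An element $m$ is principal if it is meet principal ($a\wedge mb=m((a:m)\wedge b)$ for all $a,b$) and join principal ($a\vee(b:m)=(am\vee b):m$ for all $a,b$). An $r$-lattice is a modular, principally generated, compactly generated multiplicative lattice with $1$ compact. A multiplicatively closed subset is a nonempty $S\subseteq L_*$ closed under multiplication. An element $a$ is $S$-compact if there exist a compact $b$ and $s\in S$ with $s a\le b\le a$; $L$ is $S$-Noetherian if every element is $S$-compact. A proper element $p$ with $t\not\le p$ for all $t\in S$ is $S$-prime if there exists $s\in S$ such that for all $a,b\in L$, $a\cdot b\le p$ implies $s\cdot a\le p$ or $s\cdot b\le p$. *)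

(* Defs.v *)
From Stdlib Require Import List.
Set Implicit Arguments.

Record MultLattice := {
  car :> Type;
  le : car -> car -> Prop;
  sup : (car -> Prop) -> car;
  mul : car -> car -> car;
  one : car;
  le_refl : forall a, le a a;
  le_trans : forall a b c, le a b -> le b c -> le a c;
  le_antisym : forall a b, le a b -> le b a -> a = b;
  sup_ub : forall (X : car -> Prop) x, X x -> le x (sup X);
  sup_least : forall (X : car -> Prop) b, (forall x, X x -> le x b) -> le (sup X) b;
  mulC : forall a b, mul a b = mul b a;
  mulA : forall a b c, mul a (mul b c) = mul (mul a b) c;
  mul1 : forall a, mul one a = a;
  one_top : forall a, le a one;
  mul_sup : forall a (X : car -> Prop),
      mul a (sup X) = sup (fun y => exists x, X x /\ y = mul a x)
}.

Section Ops.
Context {L : MultLattice}.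

Definition zero : L := sup L (fun _ => False).
Definition join (a b : L) : L := sup L (fun x => x = a \/ x = b).
Definition meet (a b : L) : L := sup L (fun x => le L x a /\ le L x b).
Definition colon (a b : L) : L := sup L (fun x => le L (mul L x b) a).

Definition compact (c : L) : Prop :=
  forall X : L -> Prop, le L c (sup L X) ->
    exists l : list L, (forall x, In x l -> X x) /\
                       le L c (sup L (fun x => In x l)).

Definition meet_principal (m : L) : Prop :=
  forall a b, meet a (mul L m b) = mul L m (meet (colon a m) b).
Definition join_principal (m : L) : Prop :=
  forall a b, join a (colon b m) = colon (join (mul L a m) b) m.
Definition principal (m : L) : Prop := meet_principal m /\ join_principal m.

Definition modular : Prop :=
  forall a b c, le L a c -> join a (meet b c) = meet (join a b) c.
Definition principally_generated : Prop :=
  forall a, a = sup L (fun x => principal x /\ le L x a).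
Definition compactly_generated : Prop :=
  forall a, a = sup L (fun x => compact x /\ le L x a).

Definition r_lattice : Prop :=
  modular /\ principally_generated /\ compactly_generated /\ compact (one L).

(* multiplicatively closed subset: nonempty subset of L_* closed under mul *)
Definition mult_closed (S : L -> Prop) : Prop :=
  (exists s, S s) /\ (forall s, S s -> compact s) /\
  (forall s t, S s -> S t -> S (mul L s t)).

Definition S_compact (S : L -> Prop) (a : L) : Prop :=
  exists b s, compact b /\ S s /\ le L (mul L s a) b /\ le L b a.

Definition S_Noetherian (S : L -> Prop) : Prop := forall a, S_compact S a.

Definition S_prime (S : L -> Prop) (p : L) : Prop :=
  p <> one L /\ (forall t, S t -> ~ le L t p) /\
  exists s, S s /\ forall a b, le L (mul L a b) p ->
     le L (mul L s a) p \/ le L (mul L s b) p.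
End Ops.

(* Main.v *)
Require Import Defs.
From mathcomp Require Import all_boot boolp classical_sets.
From Stdlib Require Import List Classical.
Require Import Defs.

Lemma zorn_prop (T:Type) (t0:T) (R: T->T->Prop) :
  (forall t, R t t) -> (forall r s t, R r s -> R s t -> R r t) ->
  (forall A : T -> Prop, (forall s t, A s -> A t -> R s t \/ R t s) -> exists t, forall s, A s -> R s t) ->
  exists t, forall s, R t s -> R s t.
Proof.
move=> Rr Rt HA.
case: (@ZL_preorder T t0 (fun a b => `[< R a b >])).
- by move=> t; apply/asboolP.
- by move=> r s u /asboolP H1 /asboolP H2; apply/asboolP; eauto.
- move=> A Atot; case: (HA A).
    by move=> s u As Au; case: (Atot s u As Au) => /asboolP; auto.
  by move=> t Ht; exists t => s As; apply/asboolP; auto.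
by move=> t Ht; exists t => s H; apply/asboolP; apply: (Ht s); apply/asboolP.
Qed.

Arguments le {_}.
Arguments sup {_}.
Arguments mul {_}.
Arguments one {_}.

Lemma leT {L : MultLattice} (a b c : L) : le a b -> le b c -> le a c.
Proof. apply le_trans. Qed.

Lemma sup_mono {L : MultLattice} (X Y : L -> Prop) :
  (forall x, X x -> exists y, Y y /\ le x y) -> le (sup X) (sup Y).
Proof.
intros H; apply sup_least; intros x Hx; destruct (H x Hx) as [y [Hy Hxy]].
eapply leT; [exact Hxy| apply sup_ub; exact Hy].
Qed.

Lemma sup_mono' {L : MultLattice} (X : L -> Prop) b :
  (forall x, X x -> le x b) -> le (sup X) b.
Proof. apply sup_least. Qed.

Lemma mul_mono_r {L : MultLattice} (m a b : L) : le a b -> le (mul m a) (mul m b).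
Proof.
intros Hab.
assert (E : b = sup (fun z => z = a \/ z = b)).
{ apply le_antisym. apply sup_ub; auto. apply sup_least; intros z [->| ->]; auto using le_refl. }
rewrite E mul_sup. apply sup_ub. exists a; auto.
Qed.

Lemma mul_mono_l {L : MultLattice} (m a b : L) : le a b -> le (mul a m) (mul b m).
Proof. intros H; rewrite (mulC _ a) (mulC _ b); apply mul_mono_r; auto. Qed.

Lemma mul_mono {L : MultLattice} (a b c d : L) : le a b -> le c d -> le (mul a c) (mul b d).
Proof. intros; eapply leT; [apply mul_mono_l; eauto| apply mul_mono_r; auto]. Qed.

Lemma mul_le_r {L : MultLattice} (m a : L) : le (mul m a) a.
Proof. rewrite -{2}(mul1 _ a). apply mul_mono_l, one_top. Qed.

Lemma mul_le_l {L : MultLattice} (m a : L) : le (mul m a) m.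
Proof. rewrite mulC; apply mul_le_r. Qed.

Lemma colon_spec {L : MultLattice} (a b : L) : le (mul (colon a b) b) a.
Proof.
unfold colon; rewrite mulC mul_sup; apply sup_least; intros y [x [Hx ->]].
rewrite mulC; auto.
Qed.

Lemma colon_ub {L : MultLattice} (a b z : L) : le (mul z b) a -> le z (colon a b).
Proof. intros H; apply sup_ub; auto. Qed.

Lemma colon_mono {L : MultLattice} (a a' b : L) : le a a' -> le (colon a b) (colon a' b).
Proof. intros H; apply colon_ub; eapply leT; [apply colon_spec| auto]. Qed.

Lemma zero_least {L : MultLattice} (a : L) : le zero a.
Proof. apply sup_least; intros _ []. Qed.

Lemma join_l {L : MultLattice} (a b : L) : le a (join a b).
Proof. apply sup_ub; auto. Qed.
Lemma join_r {L : MultLattice} (a b : L) : le b (join a b).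
Proof. apply sup_ub; auto. Qed.
Lemma join_least {L : MultLattice} (a b c : L) : le a c -> le b c -> le (join a b) c.
Proof. intros; apply sup_least; intros z [-> | ->]; auto. Qed.

Lemma meet_l {L : MultLattice} (a b : L) : le (meet a b) a.
Proof. apply sup_least; intros z [H _]; auto. Qed.
Lemma meet_r {L : MultLattice} (a b : L) : le (meet a b) b.
Proof. apply sup_least; intros z [_ H]; auto. Qed.
Lemma meet_gl {L : MultLattice} (a b c : L) : le c a -> le c b -> le c (meet a b).
Proof. intros; apply sup_ub; auto. Qed.

Lemma mul_join {L : MultLattice} (m a b : L) : le (mul m (join a b)) (join (mul m a) (mul m b)).
Proof.
unfold join at 1; rewrite mul_sup; apply sup_least; intros y [x [[-> | ->] ->]].
apply join_l. apply join_r.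
Qed.

Lemma meet_princ {L : MultLattice} (x a : L) : meet_principal x -> le (meet a x) (mul x (colon a x)).
Proof.
intros Hm. specialize (Hm a one).
eapply leT; [| eapply leT; [apply (mul_mono_r x (meet (colon a x) one)); apply meet_l|]].
2: apply le_refl.
rewrite -Hm. apply meet_gl. apply meet_l. rewrite mulC mul1. apply meet_r.
Qed.

Definition lsup {L : MultLattice} (l : list L) : L := sup (fun z => In z l).

Lemma lsup_app_l {L : MultLattice} (l l' : list L) : le (lsup l) (lsup (l ++ l')).
Proof. apply sup_mono; intros x Hx; exists x; split; [apply in_or_app; auto| apply le_refl]. Qed.
Lemma lsup_app_r {L : MultLattice} (l l' : list L) : le (lsup l') (lsup (l ++ l')).
Proof. apply sup_mono; intros x Hx; exists x; split; [apply in_or_app; auto| apply le_refl]. Qed.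

Lemma compact_lsup {L : MultLattice} (l : list L) :
  (forall z, In z l -> compact z) -> compact (lsup l).
Proof.
induction l as [|a l IH]; intros Hc X HX.
- exists nil; split; [intros _ []|]. apply sup_least; intros _ [].
- destruct (Hc a (or_introl erefl) X) as [la [Hla Hle]].
  { eapply leT; [|exact HX]. apply sup_ub; left; auto. }
  destruct (IH (fun z H => Hc z (or_intror H)) X) as [lb [Hlb Hle2]].
  { eapply leT; [|exact HX]. apply sup_mono; intros x Hx; exists x; split; [right; auto| apply le_refl]. }
  exists (la ++ lb); split.
  + intros x Hx; destruct (in_app_or _ _ _ Hx); auto.
  + apply sup_least; intros z [<- | Hz].
    * eapply leT; [exact Hle| apply lsup_app_l].
    * eapply leT; [|apply lsup_app_r]. eapply leT; [|exact Hle2]. apply sup_ub; auto.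
Qed.

Lemma filter_ex {L : MultLattice} (P : L -> Prop) (l : list L) :
  exists l', forall z, In z l' <-> In z l /\ P z.
Proof.
induction l as [|a l [l' IH]].
- exists nil; simpl; tauto.
- destruct (classic (P a)).
  + exists (a :: l'); intros z; simpl; rewrite IH; split; [intros [<-|]|intros [[<-|] ?]]; tauto.
  + exists l'; intros z; simpl; rewrite IH; split; [tauto| intros [[<-|] ?]; tauto].
Qed.

Lemma collect_lists {L : MultLattice} (X : L -> Prop) x (m : list L) :
  (forall z, In z m -> exists l, (forall w, In w l -> X w) /\ z = colon (lsup l) x) ->
  exists l0, (forall w, In w l0 -> X w) /\ forall z, In z m -> le z (colon (lsup l0) x).
Proof.
induction m as [|a m IH]; intros H.
- exists nil; split; [intros _ []| intros _ []].
- destruct (H a (or_introl erefl)) as [la [Hla ->]].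
  destruct IH as [lb [Hlb Hb]]. { intros z Hz; apply H; right; auto. }
  exists (la ++ lb); split.
  + intros w Hw; destruct (in_app_or _ _ _ Hw); auto.
  + intros z [<- | Hz].
    * apply colon_mono, lsup_app_l.
    * eapply leT; [apply Hb; auto| apply colon_mono, lsup_app_r].
Qed.

Lemma princ_compact_mul {L : MultLattice} (cg : @compactly_generated L) (x y : L) :
  principal x -> compact y -> compact (mul x y).
Proof.
intros [Hm Hj] Hy X HX.
set Z := fun z => exists l, (forall w, In w l -> X w) /\ z = colon (lsup l) x.
assert (S1 : le (mul x y) (mul x (sup Z))).
{ eapply leT. { apply (meet_gl x (sup X)); [apply mul_le_l| exact HX]. }
  rewrite (cg (meet x (sup X))). apply sup_least; intros k [Hk Hkle].
  destruct (Hk X) as [l [Hl Hkl]]. { eapply leT; [exact Hkle| apply meet_r]. }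
  eapply leT; [| apply mul_mono_r; apply (sup_ub _ Z (colon (lsup l) x)); exists l; auto].
  eapply leT; [| apply (meet_princ x (lsup l) Hm)].
  apply meet_gl; [exact Hkl| eapply leT; [exact Hkle| apply meet_l]]. }
assert (S2 : le y (sup Z)).
{ eapply leT. { apply (colon_ub (mul x (sup Z)) x y); rewrite mulC; exact S1. }
  eapply leT. { apply (colon_mono _ (join (mul (sup Z) x) zero)); rewrite mulC; apply join_l. }
  rewrite -Hj. apply join_least; [apply le_refl|].
  apply sup_ub. exists nil. split; [intros _ []|].
  apply le_antisym.
  - apply colon_mono, zero_least.
  - apply colon_mono. apply sup_least; intros _ []. }
destruct (Hy Z S2) as [m [Hm1 Hm2]].
destruct (collect_lists X x m Hm1) as [l0 [Hl0 Hz]].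
exists l0; split; [exact Hl0|].
eapply leT; [apply mul_mono_r; eapply leT; [exact Hm2| apply sup_least; exact Hz]|].
rewrite mulC; apply colon_spec.
Qed.

Lemma chain_bound {L : MultLattice} (T : Type) (v : T -> L) (A : T -> Prop) (u0 : T) :
  A u0 -> (forall s t, A s -> A t -> le (v s) (v t) \/ le (v t) (v s)) ->
  forall l : list L, (forall z, In z l -> exists u, A u /\ z = v u) ->
  exists u, A u /\ forall z, In z l -> le z (v u).
Proof.
intros Hu0 Htot l; induction l as [|a l IH]; intros H.
- exists u0; split; [auto| intros _ []].
- destruct (H a (or_introl erefl)) as [ua [Hua ->]].
  destruct IH as [u [Hu Hl]]. { intros z Hz; apply H; right; auto. }
  destruct (Htot ua u Hua Hu) as [Hle|Hle].
  + exists u; split; auto. intros z [<-|Hz]; auto.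
  + exists ua; split; auto. intros z [<-|Hz]; [apply le_refl| eapply leT; eauto].
Qed.

Arguments le : clear implicits.
Arguments sup : clear implicits.
Arguments mul : clear implicits.
Arguments one : clear implicits.

Theorem mainTheorem3 (L : MultLattice) (S : L -> Prop) :
  @r_lattice L -> mult_closed S -> S (one L) -> ~ S (@zero L) ->
  (S_Noetherian S <-> forall p : L, S_prime S p -> S_compact S p).
Proof.
intros [Hmod [Hpg [Hcg H1c]]] [Hne [HSc HSm]] HS1 HS0; split.
{ intros HN p _; apply HN. }
intros Hp. apply NNPP; intros Hnot.
apply not_all_ex_not in Hnot; destruct Hnot as [a0 Ha0].
pose T := ({a : L | ~ S_compact S a}).

destruct (@zorn_prop T (exist _ a0 Ha0) (fun u w => le L (proj1_sig u) (proj1_sig w)))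
  as [P HP].
{ intros; apply le_refl. }
{ intros r s t; apply le_trans. }
{ intros A Atot. destruct (classic (exists u, A u)) as [[u0 Hu0]|Hno].
  2: { exists (exist _ a0 Ha0); intros s Hs; exfalso; apply Hno; eauto. }
  set c := sup L (fun z => exists u, A u /\ z = proj1_sig u).
  assert (Hc : ~ S_compact S c).
  { intros [b [s [Hb [Hs [Hsb Hbc]]]]].
    destruct (Hb _ Hbc) as [l [Hl Hbl]].
    destruct (chain_bound T (fun u : T => proj1_sig u) A u0 Hu0 Atot l Hl) as [u [Hu Hul]].
    apply (proj2_sig u). exists b, s; split; [auto|split; [auto|split]].
    - eapply leT; [|exact Hsb]. apply mul_mono_r, sup_ub; eauto.
    - eapply leT; [exact Hbl| apply sup_least; exact Hul]. }
  exists (exist _ c Hc); intros s Hs; simpl; apply sup_ub; eauto. }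
set p := proj1_sig P.
assert (HnP : ~ S_compact S p) by exact (proj2_sig P).
assert (Hmax : forall q, le L p q -> q <> p -> S_compact S q).
{ intros q Hpq Hqp; apply NNPP; intros Hq.
  apply Hqp, le_antisym; [apply (HP (exist _ q Hq)); exact Hpq| exact Hpq]. }
apply HnP. apply Hp.
split; [|split].
- intros Hp1. apply HnP. rewrite Hp1.
  exists (one L), (one L); repeat split; auto. apply mul_le_r. apply le_refl.
- intros t Ht Htp. apply HnP.
  exists t, t; repeat split; auto. apply mul_le_l.
- exists (one L); split; [exact HS1|]. intros a b Hab. rewrite !mul1.
  apply NNPP; intros Hn. apply not_or_and in Hn; destruct Hn as [Ha Hb].
  assert (Hx : exists x, principal x /\ le L x a /\ ~ le L x p).
  { apply NNPP; intros Hn; apply Ha. rewrite (Hpg a). apply sup_least.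
    intros x [Hx1 Hx2]. apply NNPP; intros Hx3. apply Hn; eauto. }
  destruct Hx as [x [Hxp [Hxa Hxnp]]].
  set q1 := colon p x.
  assert (Hpq1 : le L p q1) by (apply colon_ub, mul_le_l).
  assert (Hbq1 : le L b q1).
  { apply colon_ub. eapply leT; [|exact Hab]. rewrite (mulC _ a). apply mul_mono_r; exact Hxa. }
  destruct (Hmax q1 Hpq1) as [c [t [Hc [Ht [Htc Hcq]]]]].
  { intros E; apply Hb; rewrite -E; exact Hbq1. }
  set q2 := join p x.
  destruct (Hmax q2 (join_l p x)) as [b' [s [Hb' [Hs [Hsb Hbq]]]]].
  { intros E; apply Hxnp; rewrite -E; apply join_r. }
  set K := fun z => (compact z /\ le L z p) \/ z = x.
  destruct (Hb' K) as [l [HlK Hbl]].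
  { eapply leT; [exact Hbq|]. apply join_least.
    - rewrite {1}(Hcg p). apply sup_mono; intros z Hz; exists z; split; [left; exact Hz| apply le_refl].
    - apply sup_ub; right; reflexivity. }
  destruct (filter_ex (fun z => compact z /\ le L z p) l) as [l' Hl'].
  set p0 := lsup l'.
  set d := lsup (mul L x c :: l').
  assert (Hxcp : le L (mul L x c) p).
  { eapply leT; [apply mul_mono_r; exact Hcq|]. rewrite mulC; apply colon_spec. }
  apply HnP.
  exists d, (mul L t s); split; [|split; [apply HSm; auto|split]].
  + apply compact_lsup. intros z [<-|Hz].
    * apply princ_compact_mul; auto.
    * apply Hl' in Hz; tauto.
  + rewrite -mulA.
    assert (E1 : le L (mul L s p) (join p0 (meet x p))).
    { rewrite (Hmod p0 x p).
      2: { apply sup_least; intros z Hz; apply Hl' in Hz; tauto. }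
      apply meet_gl; [|apply mul_le_r].
      eapply leT; [apply mul_mono_r, (join_l p x)|]. eapply leT; [exact Hsb|]. eapply leT; [exact Hbl|].
      apply sup_least; intros z Hz. destruct (HlK z Hz) as [Hz2| ->].
      - eapply leT; [|apply join_l]. apply sup_ub. apply Hl'; auto.
      - apply join_r. }
    eapply leT; [apply mul_mono_r; exact E1|].
    eapply leT; [apply mul_join|]. apply join_least.
    * eapply leT; [apply mul_le_r|]. apply sup_mono; intros z Hz; exists z; split; [right; exact Hz| apply le_refl].
    * eapply leT; [|apply (sup_ub _ _ (mul L x c)); left; reflexivity].
      eapply leT; [apply mul_mono_r; eapply leT; [|apply (meet_princ x p (proj1 Hxp))]; apply meet_gl; [apply meet_r|apply meet_l]|].
      rewrite mulA (mulC _ t) -mulA. apply mul_mono_r, Htc.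
  + apply sup_least; intros z [<-|Hz]; [exact Hxcp|]. apply Hl' in Hz; tauto.
Qed.
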